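(* Let $\vec S_n(t),\bar{\vec S}_n(t)\in\mathbb{C}^m$, $v_n(t)$ ($n\in\mathbb{Z}$) satisfy the discrete multicomponent Yajima--Oikawa system \begin{align*} \mathrm{i}\,\vec S_{n,t}&=v_n(\vec S_{n+1}+\vec S_{n-1})-c\,\vec S_n,\\ \mathrm{i}\,\bar{\vec S}_{n,t}&=-v_n(\bar{\vec S}_{n+1}+\bar{\vec S}_{n-1})+c\,\bar{\vec S}_n,\\ v_{n,t}&=\tfrac12 v_n\,\Delta_n^+\big(\langle\vec S_n,\bar{\vec S}_{n-1}\rangle+\langle\vec S_{n-1},\bar{\vec S}_n\rangle\big). \end{align*} Define scalars $F_n^{(j)}$ and vectors $\vec G_n^{(j)},\vec H_n^{(j)}$ ($j\ge0$) recursively by $F_n^{(0)}=1$ and \begin{align*} F_n^{(j)}&=v_nv_{n+1}\sum_{k=0}^{j-2}F_n^{(k)}F_{n+1}^{(j-k-2)}+\langle\vec S_n,\vec G_n^{(j-1)}\rangle+\langle\vec H_n^{(j-1)},\bar{\vec S}_n\rangle\quad(j\ge1),\\ \vec G_n^{(j)}&=-\tfrac{\mathrm{i}}{2}F_n^{(j)}\bar{\vec S}_{n+1}+v_{n+1}\sum_{k=0}^{j-1}F_n^{(k)}\vec G_{n+1}^{(j-k-1)}-\tfrac{\mathrm{i}}{2}v_{n+1}\sum_{k=0}^{j-1}F_n^{(k)}F_{n+1}^{(j-k-1)}\bar{\vec S}_n,\\ \vec H_n^{(j)}&=-\tfrac{\mathrm{i}}{2}F_n^{(j)}\vec S_{n+1}-v_{n+1}\sum_{k=0}^{j-1}F_n^{(k)}\vec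 H_{n+1}^{(j-k-1)}+\tfrac{\mathrm{i}}{2}v_{n+1}\sum_{k=0}^{j-1}F_n^{(k)}F_{n+1}^{(j-k-1)}\vec S_n, \end{align*} (empty sums are zero). Then the system possesses infinitely many conservation laws, obtained by comparing coefficients of each power of $1/\lambda$ on both sides of the formal power series identity \[ \Big[\log v_n+\log\Big(1+\sum_{j=1}^\infty\lambda^{-j}F_n^{(j)}\Big)\Big]_t=\Delta_n^+\Big[-\frac{\mathrm{i}}{\lambda}v_{n-1}v_n\Big(1+\sum_{j=1}^\infty\lambda^{-j}F_n^{(j)}\Big)-\mathrm{i}\lambda\frac{1}{1+\sum_{j=1}^\infty\lambda^{-j}F_{n-1}^{(j)}}\Big], \] where $\log(1+x)$ and $1/(1+x)$ are expanded as formal power series in $1/\lambda$.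
   Context: $\langle\vec a,\vec b\rangle=\sum_i a^{(i)}b^{(i)}$ is the bilinear scalar product (no conjugation); $\Delta_n^+f_n:=f_{n+1}-f_n$; $c$ is an arbitrary constant; $\bar{\vec S}_n$ is an independent vector variable. A conservation law is an identity of the form $(\rho_n)_t=\Delta_n^+ J_n$ with $\rho_n,J_n$ local functions of the dependent variables. *)

(* Defs.v *)
From Stdlib Require Import Reals ZArith Arith.
Open Scope R_scope.

Definition Cplx : Type := (R * R)%type.
Definition C0 : Cplx := (0, 0).
Definition C1 : Cplx := (1, 0).
Definition Ci : Cplx := (0, 1).
Definition RtoC (r : R) : Cplx := (r, 0).
Definition Cadd (x y : Cplx) : Cplx := (fst x + fst y, snd x + snd y).
Definition Copp (x : Cplx) : Cplx := (- fst x, - snd x).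
Definition Csub (x y : Cplx) : Cplx := Cadd x (Copp y).
Definition Cmul (x y : Cplx) : Cplx :=
  (fst x * fst y - snd x * snd y, fst x * snd y + snd x * fst y).
Definition Cinv (x : Cplx) : Cplx :=
  (fst x / (fst x ^ 2 + snd x ^ 2), - snd x / (fst x ^ 2 + snd x ^ 2)).
Definition Cdiv (x y : Cplx) : Cplx := Cmul x (Cinv y).

Definition Cderiv (f : R -> Cplx) (t : R) (d : Cplx) : Prop :=
  derivable_pt_lim (fun s => fst (f s)) t (fst d) /\
  derivable_pt_lim (fun s => snd (f s)) t (snd d).

Fixpoint csum (n : nat) (f : nat -> Cplx) : Cplx :=
  match n with
  | O => C0
  | S n' => Cadd (csum n' f) (f n')
  end.

(** * Vectors in Cplx^m, represented as nat -> Cplx (only components < m matter) *)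
Definition vec : Type := nat -> Cplx.
Definition vadd (x y : vec) : vec := fun k => Cadd (x k) (y k).
Definition vscal (a : Cplx) (x : vec) : vec := fun k => Cmul a (x k).
Definition vsum (n : nat) (f : nat -> vec) : vec := fun k => csum n (fun j => f j k).
(** bilinear scalar product <a,b> = sum_{k<m} a^(k) b^(k), no conjugation *)
Definition dot (m : nat) (a b : vec) : Cplx := csum m (fun k => Cmul (a k) (b k)).

Definition half : Cplx := RtoC (/ 2).
Definition mi2 : Cplx := Cmul (Copp Ci) half.
Definition pi2 : Cplx := Cmul Ci half.

(** * The recursion for F_n^(j), G_n^(j), H_n^(j) at a fixed time.
    [tab m Sf Sbf v j k n] = (F_n^(k), G_n^(k), H_n^(k)) for every k <= j. *)
Definition triple : Type := (Cplx * vec * vec)%type.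

Fixpoint tab (m : nat) (Sf Sbf : Z -> vec) (v : Z -> Cplx) (j : nat)
  : nat -> Z -> triple :=
  match j with
  | O => fun _ n =>
      (C1, vscal mi2 (Sbf (n + 1)%Z), vscal mi2 (Sf (n + 1)%Z))
  | S j' =>
      let T := tab m Sf Sbf v j' in
      let F k n := fst (fst (T k n)) in
      let G k n := snd (fst (T k n)) in
      let H k n := snd (T k n) in
      let Fn n :=
        Cadd (Cmul (Cmul (v n) (v (n + 1)%Z))
                   (csum j' (fun k => Cmul (F k n) (F (j' - 1 - k)%nat (n + 1)%Z))))
             (Cadd (dot m (Sf n) (G j' n)) (dot m (H j' n) (Sbf n))) in
      let Gn n :=
        vadd (vadd (vscal (Cmul mi2 (Fn n)) (Sbf (n + 1)%Z))
                   (vscal (v (n + 1)%Z)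
                      (vsum (S j') (fun k => vscal (F k n) (G (j' - k)%nat (n + 1)%Z)))))
             (vscal (Cmul (Cmul mi2 (v (n + 1)%Z))
                          (csum (S j') (fun k => Cmul (F k n) (F (j' - k)%nat (n + 1)%Z))))
                    (Sbf n)) in
      let Hn n :=
        vadd (vadd (vscal (Cmul mi2 (Fn n)) (Sf (n + 1)%Z))
                   (vscal (Copp (v (n + 1)%Z))
                      (vsum (S j') (fun k => vscal (F k n) (H (j' - k)%nat (n + 1)%Z)))))
             (vscal (Cmul (Cmul pi2 (v (n + 1)%Z))
                          (csum (S j') (fun k => Cmul (F k n) (F (j' - k)%nat (n + 1)%Z))))
                    (Sf n)) in
      fun k n => if (k <=? j')%nat then T k n else (Fn n, Gn n, Hn n)
  end.

Definition FF (m : nat) (Sf Sbf : Z -> vec) (v : Z -> Cplx) (j : nat) (n : Z) : Cplx :=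
  fst (fst (tab m Sf Sbf v j j n)).

(** * Formal power series in mu = 1/lambda, as coefficient sequences *)
Definition ps : Type := nat -> Cplx.
Definition psmul (a b : ps) : ps :=
  fun j => csum (S j) (fun i => Cmul (a i) (b (j - i)%nat)).
Fixpoint pspow (a : ps) (k : nat) : ps :=
  match k with
  | O => fun j => if (j =? 0)%nat then C1 else C0
  | S k' => psmul a (pspow a k')
  end.
(** log(1+X) = sum_{k>=1} (-1)^(k+1) X^k / k, for X with zero constant term
    (X^k has no terms below mu^k, so the sum for coefficient j stops at k = j) *)
Definition pslog1p (a : ps) : ps :=
  fun j => csum j (fun k => Cmul (RtoC ((-1) ^ k / INR (S k))) (pspow a (S k) j)).
(** 1/(1+X) = sum_{k>=0} (-1)^k X^k, for X with zero constant term *)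
Definition psinv1p (a : ps) : ps :=
  fun j => csum (S j) (fun k => Cmul (RtoC ((-1) ^ k)) (pspow a k j)).
Definition ps1p (a : ps) : ps := fun j => if (j =? 0)%nat then Cadd C1 (a j) else a j.

Definition Xser (m : nat) (Sf Sbf : Z -> vec) (v : Z -> Cplx) (n : Z) : ps :=
  fun j => if (j =? 0)%nat then C0 else FF m Sf Sbf v j n.

(** density: coefficient of lambda^{-p} in log(1 + X_n)
    (the coefficient of lambda^0 of log v_n is treated separately) *)
Definition rho (m : nat) (Sf Sbf : Z -> vec) (v : Z -> Cplx) (p : nat) (n : Z) : Cplx :=
  pslog1p (Xser m Sf Sbf v n) p.

(** flux: coefficient of lambda^{-p} in
    -(i/lambda) v_{n-1} v_n (1 + X_n) - i lambda / (1 + X_{n-1}) *)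
Definition flux (m : nat) (Sf Sbf : Z -> vec) (v : Z -> Cplx) (p : nat) (n : Z) : Cplx :=
  Cadd (Cmul (Copp Ci)
             (match p with
              | O => C0
              | S p' => Cmul (Cmul (v (n - 1)%Z) (v n)) (ps1p (Xser m Sf Sbf v n) p')
              end))
       (Cmul (Copp Ci) (psinv1p (Xser m Sf Sbf v (n - 1)%Z) (S p))).

(* Main.v *)
Require Import Defs.
From Stdlib Require Import Reals ZArith Arith.
Open Scope R_scope.

From Stdlib Require Import Lia Lra Ring Field FunctionalExtensionality.
Import Defs.

Lemma Cring_theory : ring_theory C0 C1 Cadd Cmul Csub Copp (@eq Cplx).
Proof.
  constructor; intros; repeat match goal with x : Cplx |- _ => destruct x end;
  unfold Csub, Cadd, Cmul, Copp, C0, C1; simpl; f_equal; ring.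
Qed.
Add Ring Cring : Cring_theory.

Lemma csum_ext n f g : (forall i, (i < n)%nat -> f i = g i) -> csum n f = csum n g.
Proof. induction n; simpl; intros H; auto. rewrite IHn by (intros; apply H; lia). rewrite H by lia; auto. Qed.

Lemma csum_add n f g : csum n (fun i => Cadd (f i) (g i)) = Cadd (csum n f) (csum n g).
Proof. induction n; simpl. unfold C0, Cadd; simpl; f_equal; ring. rewrite IHn; ring. Qed.

Lemma csum_opp n f : csum n (fun i => Copp (f i)) = Copp (csum n f).
Proof. induction n; simpl. unfold C0, Copp; simpl; f_equal; ring. rewrite IHn; ring. Qed.

Lemma csum_mull n a f : csum n (fun i => Cmul a (f i)) = Cmul a (csum n f).
Proof. induction n; simpl. unfold C0, Cmul; simpl; f_equal; ring. rewrite IHn; ring. Qed.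

Lemma csum_zero n f : (forall i, (i < n)%nat -> f i = C0) -> csum n f = C0.
Proof. induction n; simpl; intros H; auto. rewrite IHn by (intros; apply H; lia). rewrite H by lia; ring. Qed.

Lemma csum_shift n f : csum (S n) f = Cadd (f O) (csum n (fun i => f (S i))).
Proof. induction n; simpl. ring. simpl in IHn. rewrite IHn. ring. Qed.

Lemma csum_rev n f : csum n f = csum n (fun i => f (n - 1 - i)%nat).
Proof.
  induction n. reflexivity.
  rewrite (csum_shift n (fun i => f (S n - 1 - i)%nat)). simpl csum at 1.
  replace (S n - 1 - 0)%nat with n by lia.
  rewrite (csum_ext n (fun i => f (S n - 1 - S i)%nat) (fun i => f (n - 1 - i)%nat)) by (intros; f_equal; lia).
  rewrite <- IHn. ring.
Qed.

Lemma csum_tri j (f : nat -> nat -> Cplx) :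
  csum (S j) (fun i => csum (S (j - i)) (fun k => f i k)) =
  csum (S j) (fun l => csum (S l) (fun i => f i (l - i)%nat)).
Proof.
  induction j.
  - simpl. reflexivity.
  - change (csum (S (S j)) (fun l => csum (S l) (fun i => f i (l - i)%nat)))
      with (Cadd (csum (S j) (fun l => csum (S l) (fun i => f i (l - i)%nat)))
                 (csum (S (S j)) (fun i => f i (S j - i)%nat))).
    rewrite <- IHj.
    change (csum (S (S j)) (fun i => csum (S (S j - i)) (fun k => f i k)))
      with (Cadd (csum (S j) (fun i => csum (S (S j - i)) (fun k => f i k)))
                 (csum (S (S j - S j)) (fun k => f (S j) k))).
    rewrite (csum_ext (S j) (fun i => csum (S (S j - i)) (fun k => f i k))
               (fun i => Cadd (csum (S (j - i)) (fun k => f i k)) (f i (S j - i)%nat))).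
    2:{ intros i Hi. replace (S j - i)%nat with (S (j - i)) by lia. reflexivity. }
    rewrite csum_add. replace (S j - S j)%nat with O by lia.
    change (csum (S (S j)) (fun i => f i (S j - i)%nat)) with
      (Cadd (csum (S j) (fun i => f i (S j - i)%nat)) (f (S j) (S j - S j)%nat)).
    replace (S j - S j)%nat with O by lia. change (csum 1 (fun k => f (S j) k)) with (Cadd C0 (f (S j) O)). ring.
Qed.

Definition pz : ps := fun _ => C0.
Definition po : ps := fun j => if (j =? 0)%nat then C1 else C0.
Definition padd (a b : ps) : ps := fun j => Cadd (a j) (b j).
Definition popp (a : ps) : ps := fun j => Copp (a j).
Definition psub (a b : ps) : ps := padd a (popp b).

Lemma psmul_comm a b : psmul a b = psmul b a.
Proof.
  apply functional_extensionality; intro j. unfold psmul.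
  rewrite csum_rev. apply csum_ext. intros i Hi.
  replace (S j - 1 - i)%nat with (j - i)%nat by lia.
  replace (j - (j - i))%nat with i by lia. ring.
Qed.

Lemma psmul_assoc a b c : psmul a (psmul b c) = psmul (psmul a b) c.
Proof.
  apply functional_extensionality; intro j. unfold psmul.
  transitivity (csum (S j) (fun i => csum (S (j - i)) (fun k => Cmul (Cmul (a i) (b k)) (c (j - i - k)%nat)))).
  { apply csum_ext; intros i Hi. rewrite <- csum_mull. apply csum_ext; intros; ring. }
  rewrite csum_tri. apply csum_ext; intros l Hl.
  rewrite (Cring_theory.(Rmul_comm)).  rewrite <- csum_mull. apply csum_ext; intros i Hi. replace (j - i - (l - i))%nat with (j - l)%nat by lia. ring.
Qed.


Lemma psmul_distr a b c : psmul (padd a b) c = padd (psmul a c) (psmul b c).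
Proof.
  apply functional_extensionality; intro j. unfold psmul, padd.
  rewrite <- csum_add. apply csum_ext; intros; ring.
Qed.

Lemma psmul_one a : psmul po a = a.
Proof.
  apply functional_extensionality; intro j. unfold psmul.
  rewrite csum_shift. rewrite csum_zero. unfold po; simpl. replace (j - 0)%nat with j by lia. ring.
  intros i Hi. unfold po; simpl. ring.
Qed.

Lemma psring_theory : ring_theory pz po padd psmul psub popp (@eq ps).
Proof.
  constructor; intros.
  all: try apply psmul_one; try apply psmul_comm; try apply psmul_assoc; try apply psmul_distr.
  all: apply functional_extensionality; intros; cbv [pz padd popp psub]; ring.
Qed.
Add Ring psring : psring_theory.

Declare Scope ps_scope.
Delimit Scope ps_scope with ps.
Infix "⊕" := padd (at level 50, left associativity) : ps_scope.
Infix "⊖" := psub (at level 50, left associativity) : ps_scope.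
Infix "⊗" := psmul (at level 40, left associativity) : ps_scope.
Notation "⊖ x" := (popp x) (at level 35, right associativity) : ps_scope.
Local Open Scope ps_scope.

Definition pc (x : Cplx) : ps := fun j => if (j =? 0)%nat then x else C0.
Definition Xs : ps := fun j => if (j =? 1)%nat then C1 else C0.

Lemma pc_add a b : pc (Cadd a b) = pc a ⊕ pc b.
Proof. apply functional_extensionality; intros [|j]; unfold pc, padd; simpl; ring. Qed.
Lemma pc_opp a : pc (Copp a) = ⊖ pc a.
Proof. apply functional_extensionality; intros [|j]; unfold pc, popp; simpl; ring. Qed.
Lemma pc_sub a b : pc (Csub a b) = pc a ⊖ pc b.
Proof. unfold Csub, psub. rewrite pc_add, pc_opp. reflexivity. Qed.
Lemma pc_one : pc C1 = po.
Proof. reflexivity. Qed.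
Lemma pc_zero : pc C0 = pz.
Proof. apply functional_extensionality; intros [|j]; reflexivity. Qed.

Lemma mul_pc_l a x j : (pc a ⊗ x) j = Cmul a (x j).
Proof.
  unfold psmul. rewrite csum_shift, csum_zero. unfold pc; simpl. replace (j - 0)%nat with j by lia. ring.
  intros; unfold pc; simpl; ring.
Qed.
Lemma mul_pc_r a x j : (x ⊗ pc a) j = Cmul (x j) a.
Proof. rewrite psmul_comm, mul_pc_l. ring. Qed.
Lemma pc_mul a b : pc (Cmul a b) = pc a ⊗ pc b.
Proof. apply functional_extensionality; intros j. rewrite mul_pc_l. destruct j; unfold pc; simpl; ring. Qed.

Lemma mul_X_0 x : (Xs ⊗ x) 0%nat = C0.
Proof. unfold psmul, Xs. simpl. ring. Qed.
Lemma mul_X_S x j : (Xs ⊗ x) (S j) = x j.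
Proof.
  unfold psmul. rewrite csum_shift, csum_shift, csum_zero. unfold Xs; simpl.
  replace (j - 0)%nat with j by lia. ring.
  intros; unfold Xs; simpl. ring.
Qed.
Lemma padd_j a b j : (a ⊕ b) j = Cadd (a j) (b j).
Proof. reflexivity. Qed.
Lemma psub_j a b j : (a ⊖ b) j = Csub (a j) (b j).
Proof. reflexivity. Qed.
Lemma popp_j a j : (⊖ a) j = Copp (a j).
Proof. reflexivity. Qed.

Lemma mul_Xr_S a b j : (a ⊗ (Xs ⊗ b)) (S j) = csum (S j) (fun i => Cmul (a i) (b (j - i)%nat)).
Proof.
  replace (a ⊗ (Xs ⊗ b)) with (Xs ⊗ (a ⊗ b)) by ring. rewrite mul_X_S. reflexivity.
Qed.

Fixpoint psum (n : nat) (f : nat -> ps) : ps :=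
  match n with O => pz | S n' => psum n' f ⊕ f n' end.
Lemma psum_j n f j : psum n f j = csum n (fun k => f k j).
Proof. induction n; simpl. reflexivity. rewrite padd_j, IHn. reflexivity. Qed.
Lemma psum_ext n f g : (forall k, (k < n)%nat -> f k = g k) -> psum n f = psum n g.
Proof. induction n; simpl; intros H; auto. rewrite IHn by (intros; apply H; lia). rewrite H by lia; auto. Qed.
Lemma psum_add n f g : psum n (fun k => f k ⊕ g k) = psum n f ⊕ psum n g.
Proof. induction n; simpl. unfold pz; apply functional_extensionality; intro; unfold padd; simpl; ring.
  rewrite IHn; ring. Qed.
Lemma psum_mull n a f : psum n (fun k => a ⊗ f k) = a ⊗ psum n f.
Proof. induction n; simpl.
  - apply functional_extensionality; intro j. unfold pz, psmul. rewrite csum_zero; auto. intros; ring.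
  - rewrite IHn; ring. Qed.

Definition vps : Type := nat -> ps.
Definition vpadd (u w : vps) : vps := fun k => u k ⊕ w k.
Definition vpscal (a : ps) (u : vps) : vps := fun k => a ⊗ u k.
Definition vconst (x : vec) : vps := fun k => pc (x k).
Definition dotp (m : nat) (u w : vps) : ps := psum m (fun k => u k ⊗ w k).

Lemma dotp_addl m u1 u2 w : dotp m (vpadd u1 u2) w = dotp m u1 w ⊕ dotp m u2 w.
Proof. unfold dotp, vpadd. rewrite <- psum_add. apply psum_ext; intros; ring. Qed.
Lemma dotp_addr m u w1 w2 : dotp m u (vpadd w1 w2) = dotp m u w1 ⊕ dotp m u w2.
Proof. unfold dotp, vpadd. rewrite <- psum_add. apply psum_ext; intros; ring. Qed.
Lemma dotp_scall m a u w : dotp m (vpscal a u) w = a ⊗ dotp m u w.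
Proof. unfold dotp, vpscal. rewrite <- psum_mull. apply psum_ext; intros; ring. Qed.
Lemma dotp_scalr m a u w : dotp m u (vpscal a w) = a ⊗ dotp m u w.
Proof. unfold dotp, vpscal. rewrite <- psum_mull. apply psum_ext; intros; ring. Qed.
Lemma pc_dot m a b : pc (dot m a b) = dotp m (vconst a) (vconst b).
Proof.
  unfold dot, dotp, vconst. induction m; simpl. apply pc_zero.
  rewrite pc_add, IHm, pc_mul. reflexivity.
Qed.
Lemma pc_csum n f : pc (csum n f) = psum n (fun k => pc (f k)).
Proof. induction n; simpl. apply pc_zero. rewrite pc_add, IHn. reflexivity. Qed.

Local Open Scope ps_scope.

Section TabRel.
Variable m : nat.
Variables Sf Sbf : Z -> vec.
Variable vf : Z -> Cplx.

Definition Gam (n : Z) : ps := fun j => fst (fst (tab m Sf Sbf vf j j n)).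
Definition Gv (n : Z) : vps := fun k j => snd (fst (tab m Sf Sbf vf j j n)) k.
Definition Hv (n : Z) : vps := fun k j => snd (tab m Sf Sbf vf j j n) k.

Lemma tab_stable j k n : (k <= j)%nat -> tab m Sf Sbf vf j k n = tab m Sf Sbf vf k k n.
Proof.
  induction j; intros H.
  - replace k with O by lia. reflexivity.
  - destruct (Nat.eq_dec k (S j)) as [->|Hne]. reflexivity.
    simpl. replace (k <=? j)%nat with true by (symmetry; apply Nat.leb_le; lia).
    apply IHj. lia.
Qed.

Lemma tab_S_eq j n : tab m Sf Sbf vf (S j) (S j) n =
  (let T := tab m Sf Sbf vf j in
      let F k n := fst (fst (T k n)) in
      let G k n := snd (fst (T k n)) in
      let H k n := snd (T k n) in
      let Fn n :=
        Cadd (Cmul (Cmul (vf n) (vf (n + 1)%Z))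
                   (csum j (fun k => Cmul (F k n) (F (j - 1 - k)%nat (n + 1)%Z))))
             (Cadd (dot m (Sf n) (G j n)) (dot m (H j n) (Sbf n))) in
      let Gn n :=
        vadd (vadd (vscal (Cmul mi2 (Fn n)) (Sbf (n + 1)%Z))
                   (vscal (vf (n + 1)%Z)
                      (vsum (S j) (fun k => vscal (F k n) (G (j - k)%nat (n + 1)%Z)))))
             (vscal (Cmul (Cmul mi2 (vf (n + 1)%Z))
                          (csum (S j) (fun k => Cmul (F k n) (F (j - k)%nat (n + 1)%Z))))
                    (Sbf n)) in
      let Hn n :=
        vadd (vadd (vscal (Cmul mi2 (Fn n)) (Sf (n + 1)%Z))
                   (vscal (Copp (vf (n + 1)%Z))
                      (vsum (S j) (fun k => vscal (F k n) (H (j - k)%nat (n + 1)%Z)))))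
             (vscal (Cmul (Cmul pi2 (vf (n + 1)%Z))
                          (csum (S j) (fun k => Cmul (F k n) (F (j - k)%nat (n + 1)%Z))))
                    (Sf n)) in
      (Fn n, Gn n, Hn n)).
Proof.
  simpl. replace (match j with 0%nat => false | S m' => (j <=? m')%nat end) with false by (symmetry; apply (Nat.leb_gt (S j) j); lia). reflexivity.
Qed.

Lemma Gam_0 n : Gam n 0%nat = C1.
Proof. reflexivity. Qed.

Lemma Gam_S j n : Gam n (S j) =
  Cadd (Cmul (Cmul (vf n) (vf (n + 1)%Z))
             (csum j (fun k => Cmul (Gam n k) (Gam (n + 1)%Z (j - 1 - k)%nat))))
       (Cadd (dot m (Sf n) (fun k => Gv n k j)) (dot m (fun k => Hv n k j) (Sbf n))).
Proof.
  unfold Gam at 1. rewrite tab_S_eq. cbv zeta. simpl fst.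
  f_equal. f_equal. apply csum_ext; intros k Hk. unfold Gam.
  rewrite (tab_stable j k n) by lia. rewrite (tab_stable j (j - 1 - k) (n+1)) by lia. reflexivity.
Qed.

Definition gg (n : Z) : vps := fun k =>
  pc (Cmul mi2 (Sbf (n + 1)%Z k)) ⊕ Xs ⊗ (pc (vf (n + 1)%Z) ⊗ Gv (n + 1)%Z k ⊕
     pc (Cmul (Cmul mi2 (vf (n + 1)%Z)) (Sbf n k)) ⊗ Gam (n + 1)%Z).
Definition hh (n : Z) : vps := fun k =>
  pc (Cmul mi2 (Sf (n + 1)%Z k)) ⊕ Xs ⊗ (pc (Copp (vf (n + 1)%Z)) ⊗ Hv (n + 1)%Z k ⊕
     pc (Cmul (Cmul pi2 (vf (n + 1)%Z)) (Sf n k)) ⊗ Gam (n + 1)%Z).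

Lemma mul_0 a b : (a ⊗ b) 0%nat = Cmul (a 0%nat) (b 0%nat).
Proof. unfold psmul; simpl. ring. Qed.

Lemma gen_coef a x y z b c j :
  (a ⊗ (pc x ⊕ Xs ⊗ (pc y ⊗ b ⊕ pc z ⊗ c))) (S j) =
  Cadd (Cmul (a (S j)) x) (Cadd (Cmul y (csum (S j) (fun i => Cmul (a i) (b (j - i)%nat))))
                                (Cmul z (csum (S j) (fun i => Cmul (a i) (c (j - i)%nat))))).
Proof.
  replace (a ⊗ (pc x ⊕ Xs ⊗ (pc y ⊗ b ⊕ pc z ⊗ c))) with
    (a ⊗ pc x ⊕ a ⊗ (Xs ⊗ (pc y ⊗ b ⊕ pc z ⊗ c))) by ring.
  rewrite padd_j, mul_pc_r, mul_Xr_S. f_equal.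
  rewrite <- !csum_mull, <- csum_add. apply csum_ext; intros.
  rewrite padd_j, !mul_pc_l. ring.
Qed.

Lemma gen_coef0 a x y z b c :
  a 0%nat = C1 -> (a ⊗ (pc x ⊕ Xs ⊗ (pc y ⊗ b ⊕ pc z ⊗ c))) 0%nat = x.
Proof. intros H. rewrite mul_0, padd_j, mul_X_0, H. unfold pc; simpl. ring. Qed.

Lemma csum_tabF j n f :
  csum (S j) (fun i => Cmul (fst (fst (tab m Sf Sbf vf j i n))) (f i)) =
  csum (S j) (fun i => Cmul (Gam n i) (f i)).
Proof. apply csum_ext; intros i Hi. unfold Gam. rewrite (tab_stable j i n) by lia. reflexivity. Qed.

Lemma Gv_S n k j : Gv n k (S j) =
  Cadd (Cadd (Cmul (Cmul mi2 (Gam n (S j))) (Sbf (n+1)%Z k))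
             (Cmul (vf (n+1)%Z) (csum (S j) (fun i => Cmul (Gam n i) (Gv (n+1)%Z k (j - i)%nat)))))
       (Cmul (Cmul (Cmul mi2 (vf (n+1)%Z)) (csum (S j) (fun i => Cmul (Gam n i) (Gam (n+1)%Z (j - i)%nat)))) (Sbf n k)).
Proof.
  unfold Gv at 1. unfold Gam at 1. rewrite !tab_S_eq. cbv zeta. cbn [fst snd].
  unfold vadd, vscal, vsum.
  rewrite !csum_tabF.
  rewrite (csum_ext (S j) (fun i => Cmul (Gam n i) (snd (fst (tab m Sf Sbf vf j (j - i) (n + 1)%Z)) k))
     (fun i => Cmul (Gam n i) (Gv (n + 1)%Z k (j - i)%nat))).
  rewrite (csum_ext (S j) (fun i => Cmul (Gam n i) (fst (fst (tab m Sf Sbf vf j (j - i) (n + 1)%Z))))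
     (fun i => Cmul (Gam n i) (Gam (n + 1)%Z (j - i)%nat))).
  reflexivity.
  all: intros i Hi; unfold Gam, Gv; rewrite (tab_stable j (j - i) (n+1)%Z) by lia; reflexivity.
Qed.

Lemma Hv_S n k j : Hv n k (S j) =
  Cadd (Cadd (Cmul (Cmul mi2 (Gam n (S j))) (Sf (n+1)%Z k))
             (Cmul (Copp (vf (n+1)%Z)) (csum (S j) (fun i => Cmul (Gam n i) (Hv (n+1)%Z k (j - i)%nat)))))
       (Cmul (Cmul (Cmul pi2 (vf (n+1)%Z)) (csum (S j) (fun i => Cmul (Gam n i) (Gam (n+1)%Z (j - i)%nat)))) (Sf n k)).
Proof.
  unfold Hv at 1. unfold Gam at 1. rewrite !tab_S_eq. cbv zeta. cbn [fst snd].
  unfold vadd, vscal, vsum.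
  rewrite !csum_tabF.
  rewrite (csum_ext (S j) (fun i => Cmul (Gam n i) (snd (tab m Sf Sbf vf j (j - i) (n + 1)%Z) k))
     (fun i => Cmul (Gam n i) (Hv (n + 1)%Z k (j - i)%nat))).
  rewrite (csum_ext (S j) (fun i => Cmul (Gam n i) (fst (fst (tab m Sf Sbf vf j (j - i) (n + 1)%Z))))
     (fun i => Cmul (Gam n i) (Gam (n + 1)%Z (j - i)%nat))).
  reflexivity.
  all: intros i Hi; unfold Gam, Hv; rewrite (tab_stable j (j - i) (n+1)%Z) by lia; reflexivity.
Qed.

Lemma TG n : forall k, Gv n k = Gam n ⊗ gg n k.
Proof.
  intros k. apply functional_extensionality; intros [|j]; unfold gg.
  - rewrite gen_coef0 by reflexivity. reflexivity.
  - rewrite gen_coef, Gv_S. ring.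
Qed.

Lemma TH n : forall k, Hv n k = Gam n ⊗ hh n k.
Proof.
  intros k. apply functional_extensionality; intros [|j]; unfold hh.
  - rewrite gen_coef0 by reflexivity. reflexivity.
  - rewrite gen_coef, Hv_S. ring.
Qed.

Lemma TF n : Gam n = po ⊕ Xs ⊗ (Xs ⊗ (pc (Cmul (vf n) (vf (n + 1)%Z)) ⊗ (Gam n ⊗ Gam (n + 1)%Z)) ⊕
                        (dotp m (vconst (Sf n)) (Gv n) ⊕ dotp m (Hv n) (vconst (Sbf n)))).
Proof.
  apply functional_extensionality; intros [|j].
  - rewrite padd_j, mul_X_0, Gam_0. unfold po; simpl; ring.
  - rewrite Gam_S, padd_j, mul_X_S, !padd_j. unfold po at 1; simpl.
    unfold dotp. rewrite !psum_j.
    assert (E: Cmul (Cmul (vf n) (vf (n + 1)%Z)) (csum j (fun k => Cmul (Gam n k) (Gam (n + 1)%Z (j - 1 - k)%nat)))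
             = (Xs ⊗ (pc (Cmul (vf n) (vf (n + 1)%Z)) ⊗ (Gam n ⊗ Gam (n + 1)%Z))) j).
    { destruct j. rewrite mul_X_0. simpl. ring.
      rewrite mul_X_S, mul_pc_l. f_equal. unfold psmul. apply csum_ext; intros; f_equal; f_equal; lia. }
    rewrite E. unfold dot. 
    rewrite (csum_ext m (fun k => (vconst (Sf n) k ⊗ Gv n k) j) (fun k => Cmul (Sf n k) (Gv n k j)))
      by (intros; unfold vconst; apply mul_pc_l).
    rewrite (csum_ext m (fun k => (Hv n k ⊗ vconst (Sbf n) k) j) (fun k => Cmul (Hv n k j) (Sbf n k)))
      by (intros; unfold vconst; apply mul_pc_r).
    ring.
Qed.

Definition PP (n : Z) : ps := dotp m (vconst (Sf n)) (gg n) ⊕ dotp m (hh n) (vconst (Sbf n)).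
Definition AA (n : Z) : ps := Xs ⊗ pc (Cmul (vf n) (vf (n + 1)%Z)) ⊗ Gam (n + 1)%Z ⊕ PP n.

Lemma R1 n : Gam n = po ⊕ Gam n ⊗ (Xs ⊗ AA n).
Proof.
  rewrite (TF n) at 1.
  replace (Gv n) with (vpscal (Gam n) (gg n)) by (apply functional_extensionality; intro k; rewrite TG; reflexivity).
  replace (Hv n) with (vpscal (Gam n) (hh n)) by (apply functional_extensionality; intro k; rewrite TH; reflexivity).
  rewrite dotp_scalr, dotp_scall. unfold AA, PP. ring.
Qed.

Lemma R2v n : gg n = vpadd (vpscal (pc mi2) (vconst (Sbf (n + 1)%Z)))
   (vpscal (Xs ⊗ pc (vf (n + 1)%Z) ⊗ Gam (n + 1)%Z) (vpadd (gg (n + 1)%Z) (vpscal (pc mi2) (vconst (Sbf n))))).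
Proof.
  apply functional_extensionality; intro k. unfold gg at 1. rewrite TG.
  unfold vpadd, vpscal, vconst. rewrite !pc_mul. ring.
Qed.

Lemma R3v n : hh n = vpadd (vpscal (pc mi2) (vconst (Sf (n + 1)%Z)))
   (vpscal (⊖ (Xs ⊗ pc (vf (n + 1)%Z) ⊗ Gam (n + 1)%Z)) (vpadd (hh (n + 1)%Z) (vpscal (pc mi2) (vconst (Sf n))))).
Proof.
  apply functional_extensionality; intro k. unfold hh at 1. rewrite TH.
  unfold vpadd, vpscal, vconst. rewrite !pc_mul, pc_opp. unfold mi2, pi2. rewrite !pc_mul, pc_opp. ring.
Qed.

End TabRel.

Local Open Scope ps_scope.

Lemma dpl_eq f x l l' : derivable_pt_lim f x l -> l = l' -> derivable_pt_lim f x l'.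
Proof. intros H ->; exact H. Qed.

Lemma Cderiv_ext f g t d : (forall s, f s = g s) -> Cderiv f t d -> Cderiv g t d.
Proof. intros H. replace g with f by (apply functional_extensionality; auto). auto. Qed.
Lemma Cderiv_val f t d d' : d = d' -> Cderiv f t d -> Cderiv f t d'.
Proof. intros ->; auto. Qed.

Lemma Cderiv_const c t : Cderiv (fun _ => c) t C0.
Proof. split; simpl; apply derivable_pt_lim_const. Qed.

Lemma Cderiv_add f g t a b : Cderiv f t a -> Cderiv g t b -> Cderiv (fun s => Cadd (f s) (g s)) t (Cadd a b).
Proof.
  intros [H1 H2] [H3 H4]; split; simpl.
  - apply (derivable_pt_lim_plus (fun s => fst (f s)) (fun s => fst (g s))); auto.
  - apply (derivable_pt_lim_plus (fun s => snd (f s)) (fun s => snd (g s))); auto.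
Qed.

Lemma Cderiv_opp f t a : Cderiv f t a -> Cderiv (fun s => Copp (f s)) t (Copp a).
Proof.
  intros [H1 H2]; split; simpl.
  - apply (derivable_pt_lim_opp (fun s => fst (f s))); auto.
  - apply (derivable_pt_lim_opp (fun s => snd (f s))); auto.
Qed.

Lemma Cderiv_mul f g t a b : Cderiv f t a -> Cderiv g t b ->
  Cderiv (fun s => Cmul (f s) (g s)) t (Cadd (Cmul a (g t)) (Cmul (f t) b)).
Proof.
  intros [H1 H2] [H3 H4]; split; simpl.
  - eapply dpl_eq.
    apply (derivable_pt_lim_minus (fun s => fst (f s) * fst (g s)) (fun s => snd (f s) * snd (g s)));
    apply (derivable_pt_lim_mult); eauto.
    unfold Cadd, Cmul; simpl; ring.
  - eapply dpl_eq.
    apply (derivable_pt_lim_plus (fun s => fst (f s) * snd (g s)) (fun s => snd (f s) * fst (g s)));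
    apply (derivable_pt_lim_mult); eauto.
    unfold Cadd, Cmul; simpl; ring.
Qed.

Lemma Cderiv_csum n f t df : (forall k, (k < n)%nat -> Cderiv (fun s => f k s) t (df k)) ->
  Cderiv (fun s => csum n (fun k => f k s)) t (csum n df).
Proof.
  induction n; intros H; simpl. apply Cderiv_const.
  apply Cderiv_add. apply IHn; intros; apply H; lia. apply H; lia.
Qed.

Lemma Cderiv_unique f t a b : Cderiv f t a -> Cderiv f t b -> a = b.
Proof.
  intros [H1 H2] [H3 H4]. destruct a, b. simpl in *.
  f_equal; eapply uniqueness_limite; eauto.
Qed.

Definition DUlt (a : R -> ps) (t : R) (d : ps) (N : nat) : Prop :=
  forall i, (i < N)%nat -> Cderiv (fun s => a s i) t (d i).

Lemma DU_ext a b t d d' N : (forall s, a s = b s) -> d = d' -> DUlt a t d N -> DUlt b t d' N.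
Proof. intros H1 <- H i Hi. apply (Cderiv_ext (fun s => a s i)). intros; rewrite H1; auto. auto. Qed.
Lemma DU_val a t d d' N : d = d' -> DUlt a t d N -> DUlt a t d' N.
Proof. intros <-; auto. Qed.
Lemma DU_fun a b t d N : (forall s, a s = b s) -> DUlt a t d N -> DUlt b t d N.
Proof. intros H; apply DU_ext; auto. Qed.

Lemma DU_mono a t d N N' : (N' <= N)%nat -> DUlt a t d N -> DUlt a t d N'.
Proof. intros H1 H i Hi. apply H. lia. Qed.

Lemma DU_const c t N : DUlt (fun _ => c) t pz N.
Proof. intros i Hi. apply Cderiv_const. Qed.

Lemma DU_pc x t dx N : Cderiv x t dx -> DUlt (fun s => pc (x s)) t (pc dx) N.
Proof.
  intros H i Hi. destruct i; unfold pc; simpl. auto. apply Cderiv_const.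
Qed.

Lemma DU_add a b t da db N : DUlt a t da N -> DUlt b t db N -> DUlt (fun s => a s ⊕ b s) t (da ⊕ db) N.
Proof. intros H1 H2 i Hi. apply Cderiv_add; auto. Qed.

Lemma DU_opp a t da N : DUlt a t da N -> DUlt (fun s => ⊖ a s) t (⊖ da) N.
Proof. intros H1 i Hi. apply Cderiv_opp; auto. Qed.

Lemma DU_sub a b t da db N : DUlt a t da N -> DUlt b t db N -> DUlt (fun s => a s ⊖ b s) t (da ⊖ db) N.
Proof. intros H1 H2 i Hi. apply Cderiv_add; auto. apply Cderiv_opp; auto. Qed.

Lemma DU_mul a b t da db N : DUlt a t da N -> DUlt b t db N ->
  DUlt (fun s => a s ⊗ b s) t (da ⊗ b t ⊕ a t ⊗ db) N.
Proof.
  intros H1 H2 i Hi. unfold psmul at 1. rewrite padd_j. unfold psmul.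
  rewrite <- csum_add.
  apply (Cderiv_csum (S i) (fun k s => Cmul (a s k) (b s (i - k)%nat))).
  intros k Hk. apply Cderiv_mul. apply H1; lia. apply H2; lia.
Qed.

Lemma DU_X a t da N : DUlt a t da N -> DUlt (fun s => Xs ⊗ a s) t (Xs ⊗ da) (S N).
Proof.
  intros H [|i] Hi.
  - rewrite mul_X_0. apply (Cderiv_ext (fun _ => C0)). intros; rewrite mul_X_0; auto. apply Cderiv_const.
  - rewrite mul_X_S. apply (Cderiv_ext (fun s => a s i)). intros; rewrite mul_X_S; auto. apply H; lia.
Qed.

Lemma DU_psum m f t df N : (forall k, (k < m)%nat -> DUlt (f k) t (df k) N) ->
  DUlt (fun s => psum m (fun k => f k s)) t (psum m df) N.
Proof.
  intros H i Hi. rewrite psum_j.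
  apply (Cderiv_ext (fun s => csum m (fun k => f k s i))). intros; rewrite psum_j; auto.
  apply (Cderiv_csum m (fun k s => f k s i)). intros; apply H; auto.
Qed.

Lemma DU_dotp m u w t du dw N :
  (forall k, (k < m)%nat -> DUlt (fun s => u s k) t (du k) N) ->
  (forall k, (k < m)%nat -> DUlt (fun s => w s k) t (dw k) N) ->
  DUlt (fun s => dotp m (u s) (w s)) t (dotp m du (w t) ⊕ dotp m (u t) dw) N.
Proof.
  intros H1 H2. unfold dotp. rewrite <- psum_add.
  apply (DU_psum m (fun k s => u s k ⊗ w s k)). intros k Hk. apply DU_mul; auto.
Qed.

Lemma DU_vconst x t dx N k : Cderiv (fun s => x s k) t (dx k) ->
  DUlt (fun s => vconst (x s) k) t (vconst dx k) N.
Proof. intros H. unfold vconst. apply (DU_pc (fun s => x s k)). auto. Qed.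

Local Open Scope ps_scope.

Section Ident.
Variable m : nat.
Variables Sf Sbf : Z -> vec.
Variable vf : Z -> Cplx.
Variable c : Cplx.

Definition Spv (n : Z) : vec := fun k => Cmul (Copp Ci) (Csub (Cmul (vf n) (Cadd (Sf (n + 1)%Z k) (Sf (n - 1)%Z k))) (Cmul c (Sf n k))).
Definition Sbpv (n : Z) : vec := fun k => Cmul (Copp Ci) (Cadd (Copp (Cmul (vf n) (Cadd (Sbf (n + 1)%Z k) (Sbf (n - 1)%Z k)))) (Cmul c (Sbf n k))).
Definition wv (n : Z) : Cplx := Csub (Cadd (dot m (Sf (n + 1)%Z) (Sbf n)) (dot m (Sf n) (Sbf (n + 1)%Z)))
                   (Cadd (dot m (Sf n) (Sbf (n - 1)%Z)) (dot m (Sf (n - 1)%Z) (Sbf n))).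
Definition vpv (n : Z) : Cplx := Cmul half (Cmul (vf n) (wv n)).

Local Notation G := (Gam m Sf Sbf vf).
Local Notation g := (gg m Sf Sbf vf).
Local Notation h := (hh m Sf Sbf vf).
Local Notation P := (PP m Sf Sbf vf).
Local Notation A := (AA m Sf Sbf vf).

Definition KK (n : Z) : ps := ⊖ pc (Cmul half (wv n)) ⊕ pc Ci ⊗ P n ⊖ pc Ci ⊗ P (n - 1)%Z.
Definition CG (n : Z) : ps := G n ⊗ KK n.
Definition gcv (n : Z) : vps :=
  vpadd (vpadd (vpadd (vpadd
   (vpscal (pc Ci ⊗ pc (vf (n + 1)%Z) ⊗ G (n + 1)%Z) (vpadd (g (n + 1)%Z) (vpscal (pc mi2) (vconst (Sbf n)))))
   (vpscal (⊖ (pc Ci ⊗ P n)) (g n)))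
   (vpscal (⊖ (pc Ci ⊗ pc c)) (g n)))
   (vpscal (pc half ⊗ pc (vf n) ⊗ pc (vf (n + 1)%Z) ⊗ Xs ⊗ G (n + 1)%Z) (vpadd (vconst (Sbf (n - 1)%Z)) (vconst (Sbf (n + 1)%Z)))))
   (vpscal (pc half ⊗ P n) (vconst (Sbf (n + 1)%Z))).
Definition hcv (n : Z) : vps :=
  vpadd (vpadd (vpadd (vpadd
   (vpscal (⊖ (pc Ci ⊗ pc (vf (n + 1)%Z) ⊗ G (n + 1)%Z)) (vpadd (h (n + 1)%Z) (vpscal (pc mi2) (vconst (Sf n)))))
   (vpscal (⊖ (pc Ci ⊗ P n)) (h n)))
   (vpscal (pc Ci ⊗ pc c) (h n)))
   (vpscal (pc half ⊗ pc (vf n) ⊗ pc (vf (n + 1)%Z) ⊗ Xs ⊗ G (n + 1)%Z) (vpadd (vconst (Sf (n - 1)%Z)) (vconst (Sf (n + 1)%Z)))))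
   (vpscal (pc half ⊗ P n) (vconst (Sf (n + 1)%Z))).

Definition dvG (j : Z) : ps := pc (vpv j) ⊗ G j ⊕ pc (vf j) ⊗ CG j.
Definition Dgv (n : Z) : vps := fun k =>
  pc (Cmul mi2 (Sbpv (n + 1)%Z k)) ⊕ Xs ⊗ (dvG (n + 1)%Z ⊗ (g (n + 1)%Z k ⊕ pc mi2 ⊗ pc (Sbf n k)) ⊕
     pc (vf (n + 1)%Z) ⊗ G (n + 1)%Z ⊗ (gcv (n + 1)%Z k ⊕ pc mi2 ⊗ pc (Sbpv n k))).
Definition Dhv (n : Z) : vps := fun k =>
  pc (Cmul mi2 (Spv (n + 1)%Z k)) ⊕ ⊖ (Xs ⊗ (dvG (n + 1)%Z ⊗ (h (n + 1)%Z k ⊕ pc mi2 ⊗ pc (Sf n k)) ⊕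
     pc (vf (n + 1)%Z) ⊗ G (n + 1)%Z ⊗ (hcv (n + 1)%Z k ⊕ pc mi2 ⊗ pc (Spv n k)))).

Lemma tst (a : ps) : a ⊗ pc Ci = pc Ci ⊗ a.
Proof. ring. Qed.
Lemma HiC : pc Ci ⊗ pc Ci = ⊖ po.
Proof. rewrite <- pc_mul, <- pc_one, <- pc_opp. f_equal. unfold Ci, Cmul, Copp, C1; simpl; f_equal; ring. Qed.
Lemma HhC : pc half ⊗ (po ⊕ po) = po.
Proof. rewrite <- pc_one, <- pc_add, <- pc_mul. f_equal. unfold half, RtoC, Cmul, Cadd, C1; simpl; f_equal; field. Qed.

Lemma cancel2 x y : (po ⊕ po) ⊗ x = (po ⊕ po) ⊗ y -> x = y.
Proof.
  intros H. transitivity (pc half ⊗ (po ⊕ po) ⊗ x). rewrite HhC; ring.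
  transitivity (pc half ⊗ (po ⊕ po) ⊗ y). rewrite <- !psmul_assoc, H. reflexivity. rewrite HhC; ring.
Qed.

Lemma PsiR n : G n ⊗ (po ⊖ Xs ⊗ A n) = po.
Proof. transitivity (G n ⊖ G n ⊗ (Xs ⊗ A n)). ring. rewrite (R1 m Sf Sbf vf n) at 1. ring. Qed.

Ltac expand_dots :=
  repeat (rewrite ?dotp_addl, ?dotp_addr, ?dotp_scall, ?dotp_scalr);
  unfold mi2, pi2; repeat (rewrite ?pc_mul, ?pc_add, ?pc_sub, ?pc_opp, ?pc_dot);
  unfold vpadd, vpscal, vconst.

Lemma Ig n k : gcv n k = Dgv n k ⊕
  (pc half ⊗ pc (vf (n + 1)%Z) ⊗ (pc (Sbf (n + 1 + 1)%Z k) ⊕ pc (Sbf n k))) ⊗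
  (G (n + 1)%Z ⊗ (po ⊖ Xs ⊗ A (n + 1)%Z) ⊖ po).
Proof.
  unfold Dgv, gcv, dvG, CG, KK, vpv, wv, Spv, Sbpv, AA, PP.
  replace (n + 1 - 1)%Z with n by ring.
  rewrite (R2v m Sf Sbf vf n), (R3v m Sf Sbf vf n).
  rewrite (R2v m Sf Sbf vf (n + 1)), (R3v m Sf Sbf vf (n + 1)).
  expand_dots.
  cbv beta. do 4 apply cancel2. Time ring [HiC HhC].
Qed.

Lemma Ih n k : hcv n k = Dhv n k ⊕
  (⊖ (pc half ⊗ pc (vf (n + 1)%Z) ⊗ (pc (Sf (n + 1 + 1)%Z k) ⊕ pc (Sf n k)))) ⊗
  (G (n + 1)%Z ⊗ (po ⊖ Xs ⊗ A (n + 1)%Z) ⊖ po).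
Proof.
  unfold Dhv, hcv, dvG, CG, KK, vpv, wv, Spv, Sbpv, AA, PP.
  replace (n + 1 - 1)%Z with n by ring.
  rewrite (R2v m Sf Sbf vf n), (R3v m Sf Sbf vf n).
  rewrite (R2v m Sf Sbf vf (n + 1)), (R3v m Sf Sbf vf (n + 1)).
  expand_dots.
  cbv beta. do 4 apply cancel2. Time ring [HiC HhC].
Qed.

Definition alph (n : Z) : ps := pc mi2 ⊗ (dotp m (vconst (Sf (n - 1)%Z)) (vconst (Sbf n)) ⊕ dotp m (vconst (Sf n)) (vconst (Sbf (n - 1)%Z))).
Definition bet (n : Z) : ps := dotp m (vconst (Sf (n - 1)%Z)) (g n) ⊖ dotp m (h n) (vconst (Sbf (n - 1)%Z)).

Lemma Pm1 n : P (n - 1)%Z = alph n ⊕ Xs ⊗ pc (vf n) ⊗ G n ⊗ bet n.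
Proof.
  unfold PP at 1, alph, bet.
  rewrite (R2v m Sf Sbf vf (n - 1)), (R3v m Sf Sbf vf (n - 1)).
  replace (n - 1 + 1)%Z with n by ring.
  expand_dots. cbv beta. do 4 apply cancel2. ring [HiC HhC].
Qed.

Lemma vconst_Spv n : vconst (Spv n) = vpscal (⊖ pc Ci) (vpadd (vpscal (pc (vf n)) (vpadd (vconst (Sf (n + 1)%Z)) (vconst (Sf (n - 1)%Z)))) (vpscal (⊖ pc c) (vconst (Sf n)))).
Proof.
  apply functional_extensionality; intro k. unfold vconst, vpscal, vpadd, Spv.
  unfold Csub. rewrite !pc_mul, !pc_add, !pc_opp, !pc_mul, !pc_add. ring.
Qed.
Lemma vconst_Sbpv n : vconst (Sbpv n) = vpscal (⊖ pc Ci) (vpadd (vpscal (⊖ pc (vf n)) (vpadd (vconst (Sbf (n + 1)%Z)) (vconst (Sbf (n - 1)%Z)))) (vpscal (pc c) (vconst (Sbf n)))).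
Proof.
  apply functional_extensionality; intro k. unfold vconst, vpscal, vpadd, Sbpv.
  rewrite !pc_mul, !pc_add, !pc_opp, !pc_mul, !pc_add. ring.
Qed.

Definition DP (n : Z) : ps := dotp m (vconst (Spv n)) (g n) ⊕ dotp m (vconst (Sf n)) (gcv n) ⊕
   dotp m (hcv n) (vconst (Sbf n)) ⊕ dotp m (h n) (vconst (Sbpv n)).
Definition DAA (n : Z) : ps :=
  Xs ⊗ (pc (Cadd (Cmul (vpv n) (vf (n + 1)%Z)) (Cmul (vf n) (vpv (n + 1)%Z))) ⊗ G (n + 1)%Z ⊕
        pc (Cmul (vf n) (vf (n + 1)%Z)) ⊗ CG (n + 1)%Z) ⊕ DP n.
Definition KK0 (n : Z) : ps := ⊖ pc (Cmul half (wv n)) ⊕ pc Ci ⊗ P n ⊖ pc Ci ⊗ alph n.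

Lemma IGam_poly n : KK0 n ⊗ (po ⊖ Xs ⊗ A n) ⊖ pc Ci ⊗ Xs ⊗ pc (vf n) ⊗ bet n = Xs ⊗ DAA n.
Proof.
  unfold DAA, DP. rewrite vconst_Spv, vconst_Sbpv.
  unfold KK0, alph, bet, gcv, hcv, CG, KK, vpv, wv, AA, PP.
  replace (n + 1 - 1)%Z with n by ring.
  rewrite (R2v m Sf Sbf vf n), (R3v m Sf Sbf vf n).
  rewrite (R2v m Sf Sbf vf (n + 1)), (R3v m Sf Sbf vf (n + 1)).
  expand_dots.
  cbv beta. do 4 apply cancel2. Time ring [HiC HhC].
Qed.

Lemma Igg n k : gcv n k = Dgv n k.
Proof. rewrite Ig, PsiR. ring. Qed.
Lemma Ihh n k : hcv n k = Dhv n k.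
Proof. rewrite Ih, PsiR. ring. Qed.

Lemma KK_split n : KK n = KK0 n ⊖ pc Ci ⊗ Xs ⊗ pc (vf n) ⊗ G n ⊗ bet n.
Proof. unfold KK, KK0. rewrite Pm1. ring. Qed.

Lemma IGam n : G n ⊗ KK n = Xs ⊗ (G n ⊗ KK n ⊗ A n ⊕ G n ⊗ DAA n).
Proof.
  assert (E : KK n ⊗ (po ⊖ Xs ⊗ A n) = Xs ⊗ DAA n).
  { rewrite <- IGam_poly, KK_split.
    transitivity (KK0 n ⊗ (po ⊖ Xs ⊗ A n) ⊖ pc Ci ⊗ Xs ⊗ pc (vf n) ⊗ bet n ⊗ (G n ⊗ (po ⊖ Xs ⊗ A n))).
    ring. rewrite PsiR. ring. }
  transitivity (G n ⊗ KK n ⊖ G n ⊗ (KK n ⊗ (po ⊖ Xs ⊗ A n) ⊖ Xs ⊗ DAA n)).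
  rewrite E. ring. ring.
Qed.

End Ident.

Local Open Scope ps_scope.

Section Deriv.
Variable m : nat.
Variable c : Cplx.
Variables S Sb : Z -> R -> vec.
Variable v : Z -> R -> Cplx.
Variable t : R.
Local Notation Sd s := (fun n : Z => S n s).
Local Notation Sbd s := (fun n : Z => Sb n s).
Local Notation vd s := (fun n : Z => v n s).

Hypothesis dS : forall n k, (k < m)%nat -> Cderiv (fun s => S n s k) t (Spv (Sd t) (vd t) c n k).
Hypothesis dSb : forall n k, (k < m)%nat -> Cderiv (fun s => Sb n s k) t (Sbpv (Sbd t) (vd t) c n k).
Hypothesis dv : forall n, Cderiv (fun s => v n s) t (vpv m (Sd t) (Sbd t) (vd t) n).

Local Notation GamT s n := (Gam m (Sd s) (Sbd s) (vd s) n).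
Local Notation ggT s n := (gg m (Sd s) (Sbd s) (vd s) n).
Local Notation hhT s n := (hh m (Sd s) (Sbd s) (vd s) n).
Local Notation CGt n := (CG m (Sd t) (Sbd t) (vd t) n).
Local Notation gct n := (gcv m (Sd t) (Sbd t) (vd t) c n).
Local Notation hct n := (hcv m (Sd t) (Sbd t) (vd t) c n).

Lemma gg_comp s n k : ggT s n k =
  pc (Cmul mi2 (Sb (n + 1)%Z s k)) ⊕ Xs ⊗ (pc (v (n + 1)%Z s) ⊗ GamT s (n + 1)%Z ⊗ (ggT s (n + 1)%Z k ⊕ pc mi2 ⊗ pc (Sb n s k))).
Proof.
  rewrite (R2v m (Sd s) (Sbd s) (vd s) n). unfold vpadd, vpscal, vconst. cbv beta.
  rewrite pc_mul. ring.
Qed.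

Lemma step_gg N n k : (k < m)%nat ->
  DUlt (fun s => GamT s (n + 1)%Z) t (CGt (n + 1)%Z) N ->
  DUlt (fun s => ggT s (n + 1)%Z k) t (gct (n + 1)%Z k) N ->
  DUlt (fun s => ggT s n k) t (gct n k) (Datatypes.S N).
Proof.
  intros Hk HG Hg.
  apply DU_fun with (a := fun s => pc (Cmul mi2 (Sb (n + 1)%Z s k)) ⊕ Xs ⊗ (pc (v (n + 1)%Z s) ⊗ GamT s (n + 1)%Z ⊗ (ggT s (n + 1)%Z k ⊕ pc mi2 ⊗ pc (Sb n s k)))).
  { intro s. symmetry. apply gg_comp. }
  eapply DU_val.
  2:{ apply DU_add. apply DU_pc. apply (Cderiv_mul (fun _ => mi2)). apply Cderiv_const. apply dSb; auto.
      apply DU_X. apply DU_mul. apply DU_mul. apply (DU_pc (fun s => v (n + 1)%Z s)). apply dv. exact HG.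
      apply DU_add. exact Hg. apply DU_mul. apply DU_const. apply (DU_pc (fun s => Sb n s k)). apply dSb; auto. }
  cbv beta. rewrite (Igg m (Sd t) (Sbd t) (vd t) c n k). unfold Dgv, dvG.
  repeat rewrite ?pc_add, ?pc_mul, ?pc_zero. ring.
Qed.

Lemma hh_comp s n k : hhT s n k =
  pc (Cmul mi2 (S (n + 1)%Z s k)) ⊕ ⊖ (Xs ⊗ (pc (v (n + 1)%Z s) ⊗ GamT s (n + 1)%Z ⊗ (hhT s (n + 1)%Z k ⊕ pc mi2 ⊗ pc (S n s k)))).
Proof.
  rewrite (R3v m (Sd s) (Sbd s) (vd s) n). unfold vpadd, vpscal, vconst. cbv beta.
  rewrite pc_mul. ring.
Qed.

Lemma step_hh N n k : (k < m)%nat ->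
  DUlt (fun s => GamT s (n + 1)%Z) t (CGt (n + 1)%Z) N ->
  DUlt (fun s => hhT s (n + 1)%Z k) t (hct (n + 1)%Z k) N ->
  DUlt (fun s => hhT s n k) t (hct n k) (Datatypes.S N).
Proof.
  intros Hk HG Hg.
  apply DU_fun with (a := fun s => pc (Cmul mi2 (S (n + 1)%Z s k)) ⊕ ⊖ (Xs ⊗ (pc (v (n + 1)%Z s) ⊗ GamT s (n + 1)%Z ⊗ (hhT s (n + 1)%Z k ⊕ pc mi2 ⊗ pc (S n s k))))).
  { intro s. symmetry. apply hh_comp. }
  eapply DU_val.
  2:{ apply DU_add. apply DU_pc. apply (Cderiv_mul (fun _ => mi2)). apply Cderiv_const. apply dS; auto.
      apply DU_opp. apply DU_X. apply DU_mul. apply DU_mul. apply (DU_pc (fun s => v (n + 1)%Z s)). apply dv. exact HG.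
      apply DU_add. exact Hg. apply DU_mul. apply DU_const. apply (DU_pc (fun s => S n s k)). apply dS; auto. }
  cbv beta. rewrite (Ihh m (Sd t) (Sbd t) (vd t) c n k). unfold Dhv, dvG.
  repeat rewrite ?pc_add, ?pc_mul, ?pc_zero. ring.
Qed.

Lemma Gam_comp s n : GamT s n =
  po ⊕ Xs ⊗ (GamT s n ⊗ (Xs ⊗ (pc (Cmul (v n s) (v (n + 1)%Z s)) ⊗ GamT s (n + 1)%Z) ⊕
      (dotp m (vconst (S n s)) (ggT s n) ⊕ dotp m (hhT s n) (vconst (Sb n s))))).
Proof.
  etransitivity. apply R1. unfold AA, PP. cbv beta. ring.
Qed.

Lemma step_Gam N n :
  DUlt (fun s => GamT s n) t (CGt n) N ->
  DUlt (fun s => GamT s (n + 1)%Z) t (CGt (n + 1)%Z) N ->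
  (forall k, (k < m)%nat -> DUlt (fun s => ggT s n k) t (gct n k) N) ->
  (forall k, (k < m)%nat -> DUlt (fun s => hhT s n k) t (hct n k) N) ->
  DUlt (fun s => GamT s n) t (CGt n) (Datatypes.S N).
Proof.
  intros HG HG1 Hg Hh.
  eapply DU_fun. { intro s. symmetry. apply Gam_comp. }
  eapply DU_val.
  2:{ apply DU_add. apply DU_const. apply DU_X. apply DU_mul. exact HG.
      apply DU_add. apply (DU_mono _ _ _ (Datatypes.S N)). lia. apply DU_X. apply DU_mul.
      apply (DU_pc (fun s => Cmul (v n s) (v (n + 1)%Z s))). apply Cderiv_mul; apply dv. exact HG1.
      apply DU_add.
      - apply (DU_dotp m (fun s => vconst (S n s)) (fun s => ggT s n) t (vconst (Spv (Sd t) (vd t) c n)) (gct n)).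
        intros k Hk. apply (DU_vconst (fun s => S n s)). apply dS; auto.
        exact Hg.
      - apply (DU_dotp m (fun s => hhT s n) (fun s => vconst (Sb n s)) t (hct n) (vconst (Sbpv (Sbd t) (vd t) c n))).
        exact Hh.
        intros k Hk. apply (DU_vconst (fun s => Sb n s)). apply dSb; auto. }
  cbv beta.
  transitivity (Xs ⊗ (GamT t n ⊗ KK m (Sd t) (Sbd t) (vd t) n ⊗ AA m (Sd t) (Sbd t) (vd t) n ⊕
                      GamT t n ⊗ DAA m (Sd t) (Sbd t) (vd t) c n)).
  2:{ unfold CG. symmetry. apply IGam. }
  unfold DAA, DP, CG, AA, PP. cbv beta.
  ring.
Qed.

Lemma all_deriv (N : nat) : forall n : Z,
  DUlt (fun s => GamT s n) t (CGt n) N /\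
  (forall k, (k < m)%nat -> DUlt (fun s => ggT s n k) t (gct n k) N) /\
  (forall k, (k < m)%nat -> DUlt (fun s => hhT s n k) t (hct n k) N).
Proof.
  induction N; intros n.
  - split; [|split]; intros; intros i Hi; lia.
  - destruct (IHN n) as [HG [Hg Hh]]. destruct (IHN (n + 1)%Z) as [HG1 [Hg1 Hh1]].
    split; [|split].
    + apply step_Gam; auto.
    + intros k Hk. apply step_gg; auto.
    + intros k Hk. apply step_hh; auto.
Qed.

Lemma Gam_deriv n i : Cderiv (fun s => GamT s n i) t (CGt n i).
Proof. destruct (all_deriv (Datatypes.S i) n) as [H _]. apply H. lia. Qed.

End Deriv.

Local Open Scope ps_scope.

Lemma pspow_S a k : pspow a (S k) = a ⊗ pspow a k.
Proof. reflexivity. Qed.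
Lemma pspow_0 a : pspow a 0 = po.
Proof. reflexivity. Qed.

Lemma pspow_low X : X 0%nat = C0 -> forall k j, (j < k)%nat -> pspow X k j = C0.
Proof.
  intros H0 k. induction k; intros j Hj. lia.
  rewrite pspow_S. unfold psmul. rewrite csum_shift, H0.
  rewrite csum_zero. ring. intros i Hi. rewrite IHk by lia. ring.
Qed.

Lemma mul_coef_ext a b b' p : (forall i, (i <= p)%nat -> b i = b' i) -> (a ⊗ b) p = (a ⊗ b') p.
Proof. intros H. unfold psmul. apply csum_ext; intros. rewrite H by lia. reflexivity. Qed.

Lemma csum_extend j N f : (j <= N)%nat -> (forall k, (j < k)%nat -> (k <= N)%nat -> f k = C0) ->
  csum (S N) f = csum (S j) f.
Proof.
  intros H1 H2. induction N.
  - replace j with 0%nat by lia. reflexivity.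
  - destruct (Nat.eq_dec j (S N)) as [->|Hn]. reflexivity.
    change (csum (S (S N)) f) with (Cadd (csum (S N) f) (f (S N))).
    rewrite IHN by (try lia; intros; apply H2; lia). rewrite H2 by lia. ring.
Qed.

Definition sgn (k : nat) : Cplx := RtoC ((-1) ^ k).
Definition Tser (X : ps) (N : nat) : ps := psum (S N) (fun k => pc (sgn k) ⊗ pspow X k).

Lemma sgn_S k : pc (sgn (S k)) = ⊖ pc (sgn k).
Proof. rewrite <- pc_opp. f_equal. unfold sgn, RtoC, Copp; simpl. f_equal; ring. Qed.

Lemma Tser_tele X N : (po ⊕ X) ⊗ Tser X N = po ⊕ pc (sgn N) ⊗ pspow X (S N).
Proof.
  induction N.
  - unfold Tser. change (psum 1 (fun k => pc (sgn k) ⊗ pspow X k)) with (pz ⊕ pc (sgn 0) ⊗ pspow X 0).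
    replace (pc (sgn 0)) with po by reflexivity.
    rewrite pspow_S, pspow_0. ring.
  - unfold Tser in *. change (psum (S (S N)) (fun k => pc (sgn k) ⊗ pspow X k))
      with (psum (S N) (fun k => pc (sgn k) ⊗ pspow X k) ⊕ pc (sgn (S N)) ⊗ pspow X (S N)).
    transitivity ((po ⊕ X) ⊗ psum (S N) (fun k => pc (sgn k) ⊗ pspow X k) ⊕
                   pc (sgn (S N)) ⊗ (pspow X (S N) ⊕ X ⊗ pspow X (S N))). ring.
    rewrite IHN, sgn_S, (pspow_S X (S N)). ring.
Qed.

Lemma inv_Tser X N j : X 0%nat = C0 -> (j <= N)%nat -> psinv1p X j = Tser X N j.
Proof.
  intros H0 Hj. unfold Tser. rewrite psum_j. unfold psinv1p.
  rewrite (csum_extend j N). 2: lia.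
  - apply csum_ext; intros k Hk. rewrite mul_pc_l. reflexivity.
  - intros k Hk1 Hk2. rewrite mul_pc_l, pspow_low by auto. ring.
Qed.

Lemma inv_ok X : X 0%nat = C0 -> (po ⊕ X) ⊗ psinv1p X = po.
Proof.
  intros H0. apply functional_extensionality; intro j.
  rewrite (mul_coef_ext _ _ (Tser X j)).
  2:{ intros i Hi. apply inv_Tser; auto. }
  rewrite Tser_tele, padd_j, mul_pc_l, pspow_low by (auto; lia). ring.
Qed.

Lemma ps1p_eq X : ps1p X = po ⊕ X.
Proof. apply functional_extensionality; intros [|j]; unfold ps1p, po, padd; simpl. reflexivity. ring. Qed.

Lemma INR_SS k : pc (RtoC (INR (S (S k)))) = pc (RtoC (INR (S k))) ⊕ po.
Proof.
  rewrite <- pc_one, <- pc_add. f_equal. rewrite (S_INR (S k)). unfold RtoC, Cadd, C1. simpl fst. simpl snd. f_equal; ring.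
Qed.

Lemma DU_pspow Xf t dX N : DUlt Xf t dX N -> forall k,
  DUlt (fun s => pspow (Xf s) (S k)) t (pc (RtoC (INR (S k))) ⊗ dX ⊗ pspow (Xf t) k) N.
Proof.
  intros H k. induction k.
  - eapply DU_val. 2:{ apply DU_mul. exact H. apply (DU_fun (fun _ => po)). intros; reflexivity. apply DU_const. }
    simpl. replace (pc (RtoC 1)) with po by reflexivity. ring.
  - eapply DU_val. 2:{ apply DU_mul. exact H. exact IHk. }
    match goal with |- ?L = ?R => change L with (dX ⊗ (Xf t ⊗ pspow (Xf t) k) ⊕ Xf t ⊗ (pc (RtoC (INR (S k))) ⊗ dX ⊗ pspow (Xf t) k)) end.
    change (pspow (Xf t) (S k)) with (Xf t ⊗ pspow (Xf t) k).
    rewrite INR_SS. ring.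
Qed.

Lemma log_deriv Xf t dX p :
  (forall s, Xf s 0%nat = C0) -> dX 0%nat = C0 -> DUlt Xf t dX (S p) ->
  Cderiv (fun s => pslog1p (Xf s) p) t ((dX ⊗ psinv1p (Xf t)) p).
Proof.
  intros H0 Hd0 HX. unfold pslog1p.
  eapply Cderiv_val. 2:{
    apply (Cderiv_csum p (fun k s => Cmul (RtoC ((-1) ^ k / INR (S k))) (pspow (Xf s) (S k) p))).
    intros k Hk. apply (Cderiv_mul (fun _ => _)). apply Cderiv_const.
    apply (DU_pspow Xf t dX (S p) HX k). lia. }
  rewrite (mul_coef_ext _ _ (Tser (Xf t) p)).
  2:{ intros i Hi. apply inv_Tser; auto. }
  unfold Tser. rewrite <- psum_mull, psum_j.
  change (csum (S p) (fun k => (dX ⊗ (pc (sgn k) ⊗ pspow (Xf t) k)) p)) with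
    (Cadd (csum p (fun k => (dX ⊗ (pc (sgn k) ⊗ pspow (Xf t) k)) p)) ((dX ⊗ (pc (sgn p) ⊗ pspow (Xf t) p)) p)).
  assert (Hz : (dX ⊗ (pc (sgn p) ⊗ pspow (Xf t) p)) p = C0).
  { unfold psmul at 1. rewrite csum_shift, Hd0, csum_zero. ring.
    intros i Hi. rewrite mul_pc_l, pspow_low by (auto; lia). ring. }
  rewrite Hz. replace (Cadd (csum p (fun k => (dX ⊗ (pc (sgn k) ⊗ pspow (Xf t) k)) p)) C0)
    with (csum p (fun k => (dX ⊗ (pc (sgn k) ⊗ pspow (Xf t) k)) p)) by ring.
  apply csum_ext; intros k Hk.
  replace (dX ⊗ (pc (sgn k) ⊗ pspow (Xf t) k)) with (pc (sgn k) ⊗ (dX ⊗ pspow (Xf t) k)) by ring.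
  replace (pc (RtoC (INR (S k))) ⊗ dX ⊗ pspow (Xf t) k) with (pc (RtoC (INR (S k))) ⊗ (dX ⊗ pspow (Xf t) k)) by ring.
  rewrite !mul_pc_l.
  assert (HI : INR (S k) <> 0) by (apply not_0_INR; lia).
  unfold sgn. generalize ((dX ⊗ pspow (Xf t) k) p). intros [a b].
  unfold RtoC, Cmul, Cadd, C0; simpl. f_equal; field; auto.
Qed.

Local Open Scope ps_scope.

Lemma Xser_eq m Sf Sbf vf n : Xser m Sf Sbf vf n = Gam m Sf Sbf vf n ⊖ po.
Proof.
  apply functional_extensionality; intros [|j]; unfold Xser, psub, padd, popp, po; simpl.
  - rewrite Gam_0. unfold C0, C1, Cadd, Copp; simpl; f_equal; ring.
  - unfold FF, Gam. ring.
Qed.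

Lemma psinv_eq m Sf Sbf vf n : psinv1p (Xser m Sf Sbf vf n) = po ⊖ Xs ⊗ AA m Sf Sbf vf n.
Proof.
  pose proof (inv_ok (Xser m Sf Sbf vf n) eq_refl) as H.
  rewrite Xser_eq in H. replace (po ⊕ (Gam m Sf Sbf vf n ⊖ po)) with (Gam m Sf Sbf vf n) in H by ring.
  pose proof (PsiR m Sf Sbf vf n) as H2.
  rewrite Xser_eq.
  transitivity (psinv1p (Gam m Sf Sbf vf n ⊖ po) ⊗ (Gam m Sf Sbf vf n ⊗ (po ⊖ Xs ⊗ AA m Sf Sbf vf n))).
  rewrite H2; ring.
  transitivity ((Gam m Sf Sbf vf n ⊗ psinv1p (Gam m Sf Sbf vf n ⊖ po)) ⊗ (po ⊖ Xs ⊗ AA m Sf Sbf vf n)).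
  ring. rewrite H. ring.
Qed.

Lemma AA_coef m Sf Sbf vf n p : AA m Sf Sbf vf n p =
  Cadd (match p with O => C0 | S p' => Cmul (Cmul (vf n) (vf (n + 1)%Z)) (Gam m Sf Sbf vf (n + 1)%Z p') end)
       (PP m Sf Sbf vf n p).
Proof.
  unfold AA. rewrite padd_j.
  replace (Xs ⊗ pc (Cmul (vf n) (vf (n + 1)%Z)) ⊗ Gam m Sf Sbf vf (n + 1)%Z) with
    (Xs ⊗ (pc (Cmul (vf n) (vf (n + 1)%Z)) ⊗ Gam m Sf Sbf vf (n + 1)%Z)) by ring.
  destruct p. rewrite mul_X_0. reflexivity. rewrite mul_X_S, mul_pc_l. reflexivity.
Qed.

Lemma flux_val m Sf Sbf vf p n : flux m Sf Sbf vf p n = Cmul Ci (PP m Sf Sbf vf (n - 1)%Z p).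
Proof.
  unfold flux. rewrite psinv_eq, psub_j, mul_X_S, AA_coef. replace (n - 1 + 1)%Z with n by ring.
  destruct p.
  - unfold po; simpl. ring.
  - rewrite ps1p_eq, Xser_eq. replace (po ⊕ (Gam m Sf Sbf vf n ⊖ po)) with (Gam m Sf Sbf vf n) by ring.
    unfold po; simpl. ring.
Qed.

Lemma KK_coef m Sf Sbf vf n p : KK m Sf Sbf vf n p =
  Csub (Cadd (Copp (pc (Cmul half (wv m Sf Sbf n)) p)) (Cmul Ci (PP m Sf Sbf vf n p)))
       (Cmul Ci (PP m Sf Sbf vf (n - 1)%Z p)).
Proof. unfold KK. rewrite psub_j, padd_j, popp_j, !mul_pc_l. reflexivity. Qed.

Lemma mul_cancel3 a b c : a ⊗ c = po -> a ⊗ b ⊗ c = b.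
Proof. intros H. transitivity (b ⊗ (a ⊗ c)). ring. rewrite H. ring. Qed.

Lemma Cinv_r x : x <> C0 -> Cmul x (Cinv x) = C1.
Proof.
  destruct x as [a b]. intros H. unfold Cmul, Cinv, C1; simpl.
  assert (a * a + b * b <> 0).
  { intro E. apply H. unfold C0. assert (a = 0) by nra. assert (b = 0) by nra. subst; reflexivity. }
  f_equal; field; replace (a ^ 2 + b ^ 2) with (a * a + b * b) by ring; auto.
Qed.

Theorem proposition3p1
  (m : nat) (c : Cplx) (S Sb : Z -> R -> vec) (v : Z -> R -> Cplx)
  (Hv0 : forall n t, v n t <> C0)
  (HS : forall n t k, (k < m)%nat ->
     exists d, Cderiv (fun s => S n s k) t d /\
       Cmul Ci d = Csub (Cmul (v n t) (Cadd (S (n + 1)%Z t k) (S (n - 1)%Z t k)))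
                        (Cmul c (S n t k)))
  (HSb : forall n t k, (k < m)%nat ->
     exists d, Cderiv (fun s => Sb n s k) t d /\
       Cmul Ci d = Cadd (Copp (Cmul (v n t) (Cadd (Sb (n + 1)%Z t k) (Sb (n - 1)%Z t k))))
                        (Cmul c (Sb n t k)))
  (Hv : forall n t,
     exists d, Cderiv (fun s => v n s) t d /\
       d = Cmul half (Cmul (v n t)
             (Csub (Cadd (dot m (S (n + 1)%Z t) (Sb n t)) (dot m (S n t) (Sb (n + 1)%Z t)))
                   (Cadd (dot m (S n t) (Sb (n - 1)%Z t)) (dot m (S (n - 1)%Z t) (Sb n t))))))
  : forall (p : nat) (n : Z) (t : R),
      exists dv dr,
        Cderiv (fun s => v n s) t dv /\
        Cderiv (fun s => rho m (fun k => S k s) (fun k => Sb k s) (fun k => v k s) p n) t dr /\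
        Cadd (match p with O => Cdiv dv (v n t) | _ => C0 end) dr
        = Csub (flux m (fun k => S k t) (fun k => Sb k t) (fun k => v k t) p (n + 1)%Z)
               (flux m (fun k => S k t) (fun k => Sb k t) (fun k => v k t) p n).
Proof.
  intros p n t.
  assert (dS : forall n k, (k < m)%nat -> Cderiv (fun s => S n s k) t (Spv (fun n => S n t) (fun n => v n t) c n k)).
  { intros n' k Hk. destruct (HS n' t k Hk) as [d [Hd Ed]].
    eapply Cderiv_val; [|exact Hd]. unfold Spv. rewrite <- Ed.
    destruct d; unfold Cmul, Copp, Ci; simpl; f_equal; ring. }
  assert (dSb : forall n k, (k < m)%nat -> Cderiv (fun s => Sb n s k) t (Sbpv (fun n => Sb n t) (fun n => v n t) c n k)).
  { intros n' k Hk. destruct (HSb n' t k Hk) as [d [Hd Ed]].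
    eapply Cderiv_val; [|exact Hd]. unfold Sbpv. rewrite <- Ed.
    destruct d; unfold Cmul, Copp, Ci; simpl; f_equal; ring. }
  assert (dv : forall n, Cderiv (fun s => v n s) t (vpv m (fun n => S n t) (fun n => Sb n t) (fun n => v n t) n)).
  { intros n'. destruct (Hv n' t) as [d [Hd Ed]]. rewrite Ed in Hd. exact Hd. }
  destruct (Hv n t) as [dv0 [Hdv0 Edv0]].
  set (Xf := fun s => Xser m (fun k => S k s) (fun k => Sb k s) (fun k => v k s) n).
  set (CGn := CG m (fun n => S n t) (fun n => Sb n t) (fun n => v n t) n).
  assert (HX : forall N, DUlt Xf t CGn N).
  { intros N i Hi.
    apply (Cderiv_ext (fun s => Cadd (Gam m (fun k => S k s) (fun k => Sb k s) (fun k => v k s) n i) (Copp (po i)))).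
    { intro s. unfold Xf. rewrite Xser_eq. reflexivity. }
    eapply Cderiv_val. 2:{ apply (Cderiv_add (fun s => Gam m (fun k => S k s) (fun k => Sb k s) (fun k => v k s) n i) (fun _ => Copp (po i))).
      apply (Gam_deriv m c S Sb v t dS dSb dv n i). apply Cderiv_const. }
    unfold CGn. ring. }
  assert (HCG0 : CGn 0%nat = C0).
  { eapply Cderiv_unique. apply (Gam_deriv m c S Sb v t dS dSb dv n 0).
    apply (Cderiv_ext (fun _ => C1)). intros s; rewrite Gam_0; reflexivity. apply Cderiv_const. }
  pose proof (log_deriv Xf t CGn p (fun s => eq_refl) HCG0 (HX (Datatypes.S p))) as Hrho.
  exists dv0, ((CGn ⊗ psinv1p (Xf t)) p).
  split; [exact Hdv0|]. split; [exact Hrho|].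
  unfold Xf. rewrite psinv_eq. unfold CGn, CG.
  rewrite (mul_cancel3 _ _ _ (PsiR m (fun k => S k t) (fun k => Sb k t) (fun k => v k t) n)).
  rewrite KK_coef, !flux_val. replace (n + 1 - 1)%Z with n by ring.
  destruct p.
  - unfold pc; simpl. rewrite Edv0. unfold Cdiv.
    assert (Hinv := Cinv_r (v n t) (Hv0 n t)).
    transitivity (Cadd (Cmul (Cmul half (wv m (fun n0 => S n0 t) (fun n0 => Sb n0 t) n)) (Cmul (v n t) (Cinv (v n t))))
       (Csub (Cadd (Copp (Cmul half (wv m (fun n0 => S n0 t) (fun n0 => Sb n0 t) n)))
          (Cmul Ci (PP m (fun n0 => S n0 t) (fun n0 => Sb n0 t) (fun n0 => v n0 t) n 0%nat)))
          (Cmul Ci (PP m (fun n0 => S n0 t) (fun n0 => Sb n0 t) (fun n0 => v n0 t) (n - 1)%Z 0%nat)))).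
    unfold wv. ring.
    rewrite Hinv. ring.
  - unfold pc; simpl. ring.
Qed.
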